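(* Suppose there exists a $\pi_p$-bounded element $\xi\in G$. Then $H^0_{\mathrm{ct}}(G,\pi_p)=L^p(G,V)^G=\{0\}$.
   Context: $G$ is a locally compact second countable group with left Haar measure; $(\pi_0,V)$ is a continuous representation of $G$ on a separable Banach space $V$; for $p>1$, $\pi_p$ is the representation on the Bochner space $L^p(G,V)$ given by $(\pi(g)f)(h)=\pi_0(g)(f(hg))$, and $L^p(G,V)^G$ its space of $G$-invariant vectors. An element $\xi$ is $\pi_p$-bounded if $\{\xi^n:n>0\}$ is not relatively compact and $\sup_{n>0}|||\pi(\xi^n)|||_{L^p(G,V)}<\infty$. *)

(* Defs.v *)
From HB Require Import structures.
From mathcomp Require Import all_boot all_order all_algebra.
From mathcomp Require Import all_classical all_reals all_analysis.
Set Implicit Arguments. Unset Strict Implicit. Unset Printing Implicit Defensive.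
Import Order.TTheory GRing.Theory Num.Theory.
Import numFieldNormedType.Exports.
Local Open Scope classical_set_scope.
Local Open Scope ring_scope.

Notation Borel G := (g_sigma_algebraType (@open G)).

Definition is_group (G : Type) (mul : G -> G -> G) (inv : G -> G) (e : G) :=
  [/\ forall x y z, mul x (mul y z) = mul (mul x y) z,
      forall x, mul e x = x,
      forall x, mul x e = x,
      forall x, mul (inv x) x = e &
      forall x, mul x (inv x) = e].

Definition lcsc_group (G : ptopologicalType) (mul : G -> G -> G) (inv : G -> G)
    (e : G) :=
  [/\ is_group mul inv e,
      continuous (fun xy : G * G => mul xy.1 xy.2),
      continuous inv,
      hausdorff_space G &
      locally_compact [set: G] /\ second_countable (T := G)].

Definition left_haar (R : realType) (G : ptopologicalType)
    (mul : G -> G -> G) (mu : {measure set (Borel G) -> \bar R}) :=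
  [/\ forall (g : G) (A : set G), (@open G).-sigma.-measurable A ->
        mu (mul g @` A) = mu A,
      forall K : set G, compact K -> (mu K < +oo)%E &
      forall U : set G, open U -> U !=set0 -> (0 < mu U)%E].

Definition separable (T : topologicalType) :=
  exists2 S : set T, countable S & dense S.

Definition cont_rep (R : realType) (G : ptopologicalType)
    (mul : G -> G -> G) (e : G) (V : normedModType R) (pi0 : G -> V -> V) :=
  [/\ forall g (a : R) (u v : V), pi0 g (a *: u + v) = a *: pi0 g u + pi0 g v,
      forall g, continuous (pi0 g),
      forall v, pi0 e v = v,
      forall g h v, pi0 (mul g h) v = pi0 g (pi0 h v) &
      forall v, continuous (fun g => pi0 g v)].

(* Borel measurability of a V-valued function (for separable V this is
   the same as Bochner/strong measurability, by Pettis' theorem). *)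
Definition borel_measurable (R : realType) (G : ptopologicalType)
    (V : normedModType R) (f : G -> V) :=
  forall U : set V, open U -> (@open G).-sigma.-measurable (f @^-1` U).

Definition in_Lp (R : realType) (G : ptopologicalType)
    (mu : {measure set (Borel G) -> \bar R}) (p : R) (V : normedModType R)
    (f : G -> V) :=
  borel_measurable f /\
  (\int[mu]_x ((`|f x| `^ p)%:E) < +oo)%E.

Definition Lp_norm (R : realType) (G : ptopologicalType)
    (mu : {measure set (Borel G) -> \bar R}) (p : R) (V : normedModType R)
    (f : G -> V) : R :=
  (fine (\int[mu]_x ((`|f x| `^ p)%:E))) `^ p^-1.

Definition pi_p (G : Type) (mul : G -> G -> G) (V : Type) (pi0 : G -> V -> V)
    (g : G) (f : G -> V) : G -> V :=
  fun h => pi0 g (f (mul h g)).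

Definition gpow (G : Type) (mul : G -> G -> G) (e : G) (xi : G) (n : nat) : G :=
  iter n (mul xi) e.

Definition pi_p_bounded (R : realType) (G : ptopologicalType)
    (mul : G -> G -> G) (e : G) (mu : {measure set (Borel G) -> \bar R})
    (p : R) (V : normedModType R) (pi0 : G -> V -> V) (xi : G) :=
  ~ compact (closure [set gpow mul e xi n | n in [set n : nat | (0 < n)%N]]) /\
  exists C : R, forall n : nat, (0 < n)%N ->
    forall f : G -> V, in_Lp mu p f ->
      Lp_norm mu p (pi_p mul pi0 (gpow mul e xi n) f) <= C * Lp_norm mu p f.

(* L^p(G,V)^G = {0}: every (class of) L^p function that is pi_p(g)-invariant
   (as an element of L^p, i.e. mu-a.e.) for all g is 0 in L^p (mu-a.e.). *)
Definition Lp_invariants_trivial (R : realType) (G : ptopologicalType)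
    (mul : G -> G -> G) (mu : {measure set (Borel G) -> \bar R})
    (p : R) (V : normedModType R) (pi0 : G -> V -> V) :=
  forall f : G -> V, in_Lp mu p f ->
    (forall g : G, {ae mu, forall h : Borel G, pi_p mul pi0 g f h = f h}) ->
    {ae mu, forall h : Borel G, f h = 0}.

(* Main.v *)
Require Import Defs.
From HB Require Import structures.
From mathcomp Require Import all_boot all_order all_algebra.
From mathcomp Require Import all_classical all_reals all_analysis.
From mathcomp Require Import measurable_realfun.
Import Order.TTheory GRing.Theory Num.Theory.
Import numFieldNormedType.Exports.
Local Open Scope classical_set_scope.
Local Open Scope ring_scope.
Lemma open_meas (G : ptopologicalType) (A : set G) :
  open A -> measurable (A : set (Borel G)).
Proof. by move=> oA; apply: sub_sigma_algebra. Qed.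

Lemma closed_meas (G : ptopologicalType) (A : set G) :
  closed A -> measurable (A : set (Borel G)).
Proof.
move=> cA; rewrite -(setCK A); apply: measurableC; apply: open_meas.
exact: closed_openC.
Qed.

Lemma compact_meas (G : ptopologicalType) (A : set G) :
  hausdorff_space G -> compact A -> measurable (A : set (Borel G)).
Proof. by move=> hG cA; apply: closed_meas; exact: compact_closed. Qed.

Lemma cont_preimage_meas (G : ptopologicalType) (phi : G -> G) :
  continuous phi -> forall A : set (Borel G), measurable A ->
  measurable (phi @^-1` A : set (Borel G)).
Proof.
move=> cphi.
have mphi : measurable_fun (setT : set (Borel G)) (phi : Borel G -> Borel G).
  apply: (@measurability _ _ (Borel G) (Borel G) setT phi (@open G) erefl).
  move=> _ [B oB <-]; rewrite setTI; apply: open_meas.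
  by move/continuousP : cphi; apply.
by move=> A mA; rewrite -[_ @^-1` _]setTI; apply: mphi.
Qed.

Lemma norm_pow_meas (R : realType) (G : ptopologicalType) (V : normedModType R)
    (f : G -> V) (p : R) :
  borel_measurable f ->
  measurable_fun (setT : set (Borel G)) (fun x : Borel G => `|f x| `^ p).
Proof.
move=> mf.
have mn : measurable_fun (setT : set (Borel G)) (fun x : Borel G => `|f x|).
  apply: (measurability (@measurable_realfun.RGenOpens.G R)).
    exact: measurable_realfun.RGenOpens.measurableE.
  move=> _ [_ [a [b ->]] <-]; rewrite setTI.
  apply: (mf (Num.norm @^-1` `]a, b[%classic)).
  by apply: (continuousP _).1; [exact: norm_continuous| exact: interval_open].
exact: (measurableT_comp (measurable_powR _) mn).
Qed.

Lemma cont_pair (T X Y : topologicalType) (u : T -> X) (v : T -> Y) :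
  continuous u -> continuous v -> continuous (fun t => (u t, v t)).
Proof. by move=> cu cv t; apply: cvg_pair; [exact: cu|exact: cv]. Qed.

Lemma right_mul_cont (G : ptopologicalType) (mul : G -> G -> G) (g : G) :
  continuous (fun xy : G * G => mul xy.1 xy.2) -> continuous (fun h => mul h g).
Proof.
move=> cm.
have cp : continuous (fun h : G => (h, g)).
  by apply: cont_pair; [move=> ?; exact: cvg_id|move=> ?; exact: cvg_cst].
by move=> h; apply: (continuous_comp (cp h) (cm (h, g))).
Qed.

Lemma inv_mul_cont (G : ptopologicalType) (mul : G -> G -> G) (inv : G -> G) :
  continuous (fun xy : G * G => mul xy.1 xy.2) -> continuous inv ->
  continuous (fun xy : G * G => mul (inv xy.1) xy.2).
Proof.
move=> cm ci.
have cp : continuous (fun xy : G * G => (inv xy.1, xy.2)).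
  apply: cont_pair => xy.
    by apply: (continuous_comp (cvg_fst (FG := nbhs_filter _)) (ci xy.1)).
  exact: cvg_snd.
by move=> xy; apply: (continuous_comp (cp xy) (cm _)).
Qed.

Definition restr (G : Type) (V : zmodType) (A : set G) (f : G -> V) : G -> V :=
  fun h => if h \in A then f h else 0.
Arguments restr {G V}.

Lemma restr_meas (R : realType) (G : ptopologicalType) (V : normedModType R)
    (A : set G) (f : G -> V) :
  measurable (A : set (Borel G)) -> borel_measurable f -> borel_measurable (restr A f).
Proof.
move=> mA mf U oU.
have -> : restr A f @^-1` U =
    (A `&` f @^-1` U) `|` (~` A `&` [set _ | U 0]).
  apply/seteqP; split => h; rewrite /restr /=.
    by case: ifPn => [/set_mem Ah|/negP hA] Uh; [left|right; split => //; move=> Ah; apply: hA; exact: mem_set].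
  by case => -[Ah Uh]; [rewrite mem_set|rewrite ifF //; apply/negP => /set_mem].
apply: measurableU; first exact: measurableI (mf U oU).
apply: measurableI; first exact: measurableC.
by case: (pselect (U 0)) => h; [rewrite (_ : [set _ | U 0] = setT)|rewrite (_ : [set _ | U 0] = set0)] => //; apply/seteqP; split.
Qed.

Lemma int_restr (R : realType) (G : ptopologicalType)
    (mu : {measure set (Borel G) -> \bar R}) (V : normedModType R)
    (A : set G) (f : G -> V) (p : R) : p != 0 ->
  (\int[mu]_x ((`|restr A f x| `^ p)%:E) =
   \int[mu]_(x in (A : set (Borel G))) ((`|f x| `^ p)%:E))%E.
Proof.
move=> p0; rewrite [RHS]integral_mkcond; apply: eq_integral => x _.
rewrite /restr patchE; case: ifPn => //= _.
by rewrite normr0 powR0.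
Qed.

Lemma pi_restr (G : Type) (mul : G -> G -> G) (inv : G -> G) (e : G)
    (V : zmodType) (pi0 : G -> V -> V) (K : set G) (g : G) (f : G -> V) :
  is_group mul inv e -> pi0 g 0 = 0 ->
  pi_p mul pi0 g (restr ((fun k => mul k g) @` K) f) =
  restr K (pi_p mul pi0 g f).
Proof.
move=> [mA m1 m2 mV1 mV2] pg0; apply: funext => h.
rewrite /pi_p /restr.
have -> : (mul h g \in (fun k => mul k g) @` K) = (h \in K).
  apply/idP/idP => /set_mem.
    move=> [k Kk kh]; apply: mem_set.
    have : mul (mul k g) (inv g) = mul (mul h g) (inv g) by rewrite kh.
    by rewrite -!mA mV2 !m2 => <-.
  by move=> Kh; apply: mem_set; exists h.
by case: ifP.
Qed.

Lemma pi_meas (R : realType) (G : ptopologicalType) (mul : G -> G -> G)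
    (V : normedModType R) (pi0 : G -> V -> V) (g : G) (f : G -> V) :
  continuous (fun xy : G * G => mul xy.1 xy.2) -> continuous (pi0 g) ->
  borel_measurable f -> borel_measurable (pi_p mul pi0 g f).
Proof.
move=> cm cp mf U oU.
have -> : pi_p mul pi0 g f @^-1` U =
   (fun h => mul h g) @^-1` (f @^-1` (pi0 g @^-1` U)) by [].
have oU' : open (pi0 g @^-1` U) by move/continuousP : cp; apply.
exact (@cont_preimage_meas G _ (@right_mul_cont G mul g cm) _ (mf _ oU')).
Qed.
Lemma sigma_compact (G : ptopologicalType) :
  locally_compact [set: G] -> second_countable (T := G) ->
  exists F : nat -> set G, (forall n, compact (F n)) /\ \bigcup_n F n = setT.
Proof.
move=> lc [B cB [Bo Bb]].
have [phi phiI] := countable_injP _ cB.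
pose P n V := B V /\ compact (closure V) /\ phi V = n.
pose F n := if pselect (exists V, P n V) is left h then closure (projT1 (cid h)) else set0.
exists F; split.
  move=> n; rewrite /F; case: pselect => [h|_]; last exact: compact0.
  by have [_ []] := projT2 (cid h).
apply/seteqP; split => // x _.
have [U [nU [cU clU]]] : exists U, nbhs x U /\ compact U /\ closed U.
  have [U] := lc x I.
  rewrite withinET => nU cU; by exists U.
have [V [BV Vx] VU] := Bb x U nU.
have cV : compact (closure V).
  apply: (subclosed_compact _ cU); first exact: closed_closure.
  by move: clU; rewrite closure_id => ->; exact: closureS.
exists (phi V) => //; rewrite /F; case: pselect => [h|]; last first.
  by move=> /(_ (ex_intro _ V (conj BV (conj cV erefl)))).
case: (cid h) => W [BW [_ eW]] /=.
have -> : W = V by apply: phiI; rewrite ?inE.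
exact: subset_closure.
Qed.

Lemma lin0 (R : realType) (V : normedModType R) (T : V -> V) :
  (forall (a : R) u v, T (a *: u + v) = a *: T u + T v) -> T 0 = 0.
Proof.
move=> h; have := h 1 0 0; rewrite scale1r addr0 scale1r.
by rewrite -{1}(addr0 (T 0)) => /addrI <-.
Qed.

Theorem corollary2 (R : realType) (G : ptopologicalType)
    (mul : G -> G -> G) (inv : G -> G) (e : G)
    (mu : {measure set (Borel G) -> \bar R})
    (V : completeNormedModType R) (pi0 : G -> V -> V) (p : R) :
  lcsc_group mul inv e ->
  left_haar mul mu ->
  separable V ->
  cont_rep mul e pi0 ->
  1 < p ->
  (exists xi : G, pi_p_bounded mul e mu p pi0 xi) ->
  Lp_invariants_trivial mul mu p pi0.
Proof.
move=> [grp cm ci hG [lc sc]] _ _ [lin pcont pe pmul pcg] p1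
  [xi [ncpt [C hC]]] f [mf fint] finv.
have p0 : 0 < p by apply: lt_trans p1.
have pn0 : p != 0 by rewrite gt_eqF.
pose N := fun x : Borel G => ((`|f x| `^ p)%:E : \bar R).
have mN : measurable_fun setT N.
  by apply/measurable_EFinP; exact: (@norm_pow_meas R G V f p mf).
have N0 : forall x, (0 <= N x)%E by move=> x; rewrite lee_fin powR_ge0.
pose J (A : set (Borel G)) := (\int[mu]_(x in A) N x)%E.
have J0 : forall A, (0 <= J A)%E by move=> A; apply: integral_ge0 => x _.
have JT : (J setT < +oo)%E by exact: fint.
have Jle : forall A, measurable A -> (J A <= J setT)%E.
  by move=> A mA; apply: ge0_subset_integral => //; exact: measurable_funS mN.
have Jfin : forall A, measurable A -> J A = (fine (J A))%:E.
  move=> A mA; rewrite fineK // ge0_fin_numE //.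
  exact: le_lt_trans (Jle A mA) JT.
have Nf0 : forall x, N x = 0%E -> f x = 0.
  move=> x /eqP; rewrite /N eqe => /eqP /powR_eq0_eq0 /eqP.
  by rewrite normr_eq0 => /eqP.
apply: contrapT => fnz.
have [K [cK JK]] : exists K : set G, compact K /\ (0 < J K)%E.
  apply: contrapT => hK; apply: fnz.
  have [F [cF UF]] := @sigma_compact G lc sc.
  have hF : forall n, ae_eq mu (F n : set (Borel G)) N (cst 0%E).
    move=> n; have mFn := @compact_meas G _ hG (cF n).
    apply/(ae_eq_integral_abs mu mFn); first exact: measurable_funS mN.
    have -> : (\int[mu]_(x in (F n : set (Borel G))) `|N x| = J (F n))%E.
      by apply: eq_integral => x _; rewrite gee0_abs.
    apply/eqP; rewrite eq_le J0 andbT leNgt; apply/negP => h.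
    by apply: hK; exists (F n).
  have := @negligible_bigcup _ _ _ mu (fun n => ~` [set x | F n x -> N x = 0%E]) hF.
  apply: negligibleS => x /= fx.
  have : [set: G] x by [].
  rewrite -UF => -[n _ Fnx]; exists n => //= /(_ Fnx) /Nf0.
  exact: fx.
have mK : measurable (K : set (Borel G)) := @compact_meas G _ hG cK.
pose B n := (fun k => mul k (gpow mul e xi n)) @` K.
have cB : forall n, compact (B n).
  move=> n; apply: continuous_compact => //.
  apply: continuous_subspaceT; exact: (@right_mul_cont G mul _ cm).
have mB : forall n, measurable (B n : set (Borel G)).
  by move=> n; exact: (@compact_meas G _ hG (cB n)).
pose c0 := fine (J K).
have c0pos : 0 < c0.
  by rewrite /c0 -lte_fin -Jfin.
have key : forall n, (0 < n)%N -> c0 `^ p^-1 <= C * (fine (J (B n))) `^ p^-1.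
  move=> n n0; set g := gpow mul e xi n.
  have inLp : in_Lp mu p (restr (B n) f).
    split; first exact: restr_meas.
    rewrite int_restr //; exact: le_lt_trans (Jle _ (mB n)) JT.
  have := hC n n0 _ inLp; rewrite /Lp_norm (@pi_restr G mul inv e V pi0 K g f grp); last first.
    exact: (@lin0 R V (pi0 g) (lin g)).
  rewrite (@int_restr R G mu V K (pi_p mul pi0 g f) p pn0).
  rewrite (@int_restr R G mu V (B n) f p pn0).
  have pim : measurable_fun (K : set (Borel G)) (fun x : Borel G => (`|pi_p mul pi0 g f x| `^ p)%:E).
    apply/measurable_EFinP.
    exact: (measurable_funS measurableT (@subsetT _ _) (@norm_pow_meas R G V _ p (@pi_meas R G mul V pi0 g f cm (pcont g) mf))).
  have NmK : measurable_fun (K : set (Borel G)) N.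
    exact: (measurable_funS measurableT (@subsetT _ _) mN).
  have aeK : ae_eq mu (K : set (Borel G)) (fun x : Borel G => (`|pi_p mul pi0 g f x| `^ p)%:E) N.
    by apply: filterS (finv g) => x /= hx _; rewrite /N hx.
  rewrite (@ae_eq_integral _ _ _ mu (K : set (Borel G)) N _ mK pim NmK aeK).
  by [].
have c0p : 0 < c0 `^ p^-1 by rewrite powR_gt0.
have Cpos : 0 < C.
  rewrite ltNge; apply/negP => C0; have h2 := key 1%N isT.
  have h1 : C * fine (J (B 1%N)) `^ p^-1 <= 0 by rewrite mulr_le0_ge0 ?powR_ge0.
  by have := le_trans h2 h1; rewrite leNgt c0p.
pose c := (c0 `^ p^-1 / C) `^ p.
have cpos : 0 < c by rewrite powR_gt0 // divr_gt0.
have keyc : forall n, (0 < n)%N -> (c%:E <= J (B n))%E.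
  move=> n n0; rewrite (Jfin _ (mB n)) lee_fin.
  have h := key n n0.
  have h' : c0 `^ p^-1 / C <= fine (J (B n)) `^ p^-1 by rewrite ler_pdivrMr // mulrC.
  have n1 : c0 `^ p^-1 / C \in Num.nneg by rewrite nnegrE divr_ge0 // ?powR_ge0 ?ltW.
  have n2 : fine (J (B n)) `^ p^-1 \in Num.nneg by rewrite nnegrE powR_ge0.
  have := ge0_ler_powR (ltW p0) n1 n2 h'.
  by rewrite -powRrM mulVf // powRr1 // fine_ge0.
have [mA m1 m2 mV1 mV2] := grp.
have grow : forall m : nat, exists M : set G, compact M /\ (((m%:R * c)%:E <= J M)%E).
  elim=> [|m [M [cM JM]]].
    exists set0; split; first exact: compact0.
    by rewrite mul0r; exact: J0.
  pose Q := (fun xy : G * G => mul (inv xy.1) xy.2) @` (K `*` M).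
  have cQ : compact Q.
    apply: continuous_compact; last exact: compact_setX.
    apply: continuous_subspaceT; exact: (@inv_mul_cont G mul inv cm ci).
  have [n n0 nQ] : exists2 n, (0 < n)%N & ~ Q (gpow mul e xi n).
    apply: contrapT => hn; apply: ncpt.
    apply: (subclosed_compact _ cQ); first exact: closed_closure.
    have clQ : closed Q := compact_closed hG cQ.
    move: clQ; rewrite closure_id => ->; apply: closureS => _ [k /= k0 <-].
    by apply: contrapT => hk; apply: hn; exists k.
  have MB : M `&` B n = set0.
    apply/seteqP; split => // x [Mx [k Kk kx]]; apply: nQ; exists (k, x) => //=.
    by rewrite -kx mA mV1 m1.
  have mM : measurable (M : set (Borel G)) := @compact_meas G _ hG cM.
  exists (M `|` B n); split; first exact: compactU.
  rewrite /J ge0_integral_setU //; last first.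
  - by rewrite disj_set2E MB.
  - exact: (measurable_funS measurableT (@subsetT _ _) mN).
  rewrite -/(J M) -/(J (B n)) -nat1r mulrDl mul1r EFinD addeC.
  exact: leeD JM (keyc n n0).
have [M [cM JM]] := grow (Num.bound (fine (J setT) / c)).
have := le_trans JM (Jle _ (@compact_meas G _ hG cM)).
rewrite (Jfin setT measurableT) lee_fin.
have := archi_boundP (divr_ge0 (fine_ge0 (J0 setT)) (ltW cpos)).
rewrite ltr_pdivrMr // => h1 h2.
by have := lt_le_trans h1 h2; rewrite ltxx.
Qed.
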